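(* For each fixed $x\in\mathcal X$, as $\mu\ge 0$ increases: (1) $p_{C^\mu(x)}(x)$ is non-decreasing; (2) $w(C^\mu(x))\,p_{C^\mu(x)}(x)$ is non-increasing; (3) $D^\mu(x)$ is non-increasing; (4) $w(C^\mu(x))\,p_{C^\mu(x)}(x)\,D^\mu(x)$ is non-increasing; (5) $(1-p_{C^\mu(x)}(x)-\alpha)D^\mu(x)$ is non-increasing.
   Context: Let $(X,Y)\sim P_{XY}$ on $\mathcal X\times\mathcal Y$, $\alpha\in(0,1)$. $\mathcal I$ is a finite collection of subsets of $\mathcal Y$ enumerated in a fixed lexicographic order, $w:\mathcal I\to(0,B)$ a bounded positive weight. For $C\in\mathcal I$ let $p_C(x)=\mathbb P(Y\in C\mid X=x)$, $\ell_{x,C}(\mu)=w(C)p_C(x)+\mu(p_C(x)-(1-\alpha))$ for $\mu\ge0$, $\mathcal U_x(\mu)=\max_{C\in\mathcal I}\ell_{x,C}(\mu)$. $C^\mu(x)$ is a maximizer of $\ell_{x,C}(\mu)$ over $C\in\mathcal I$, ties broken in favor of the largest $w(C)$ and then the smallest index; $D^\mu(x)=\mathbb 1\{\mathcal U_x(\mu)\ge 0\}$. *)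

(* Defs.v *)
From HB Require Import structures.
From mathcomp Require Import all_boot all_order all_algebra.
From mathcomp Require Import all_classical all_reals all_analysis.
Set Implicit Arguments. Unset Strict Implicit. Unset Printing Implicit Defensive.
Import Order.TTheory GRing.Theory Num.Theory.
Local Open Scope ring_scope.

(* PYgX x is (a version of) the conditional law of Y given X = x, a
   probability measure on Y.  The finite collection I of subsets of Y is
   Cs : 'I_n.+1 -> set Y (nonempty, enumerated in the fixed order of the
   indices), w : 'I_n.+1 -> R is the weight of each set. *)

Section Defs.
Context (d : measure_display) (Y : measurableType d) (R : realType) (X : Type).
Context (PYgX : X -> probability Y R) (n : nat) (Cs : 'I_n.+1 -> set Y)
        (w : 'I_n.+1 -> R) (alpha : R).

Definition pC (x : X) (i : 'I_n.+1) : R := fine (PYgX x (Cs i)).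

Definition ell (x : X) (i : 'I_n.+1) (mu : R) : R :=
  w i * pC x i + mu * (pC x i - (1 - alpha)).

Definition Ux (x : X) (mu : R) : R :=
  \big[Num.max/ell x ord0 mu]_(i < n.+1) ell x i mu.

Definition is_Cmu (x : X) (mu : R) (i : 'I_n.+1) : Prop :=
  [/\ forall j, ell x j mu <= ell x i mu,
      forall j, ell x j mu = ell x i mu -> w j <= w i
    & forall j, ell x j mu = ell x i mu -> w j = w i -> (i <= j)%N].

Definition Dmu (x : X) (mu : R) : R := if 0 <= Ux x mu then 1 else 0.

End Defs.

(* Main.v *)
Require Import Defs.
From HB Require Import structures.
From mathcomp Require Import all_boot all_order all_algebra.
From mathcomp Require Import all_classical all_reals all_analysis.
From mathcomp Require Import lra.
Import Order.TTheory GRing.Theory Num.Theory.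
Local Open Scope ring_scope.

Lemma bigmax_ge_seq (R : realType) (I : eqType) (r : seq I) (F : I -> R) x0 i :
  i \in r -> F i <= \big[Num.max/x0]_(j <- r) F j.
Proof.
elim: r => // a r IH; rewrite in_cons big_cons le_max => /orP[/eqP->|/IH->];
  by rewrite ?lexx ?orbT.
Qed.

Lemma Ux_eq (d : measure_display) (Y : measurableType d) (R : realType) (X : Type)
  (PYgX : X -> probability Y R) (n : nat) (Cs : 'I_n.+1 -> set Y)
  (w : 'I_n.+1 -> R) (alpha : R) x mu i :
  (forall j, ell PYgX Cs w alpha x j mu <= ell PYgX Cs w alpha x i mu) ->
  Ux PYgX Cs w alpha x mu = ell PYgX Cs w alpha x i mu.
Proof.
move=> H; apply/eqP; rewrite eq_le; apply/andP; split.
  rewrite /Ux; elim/big_ind: _ => //.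
  by move=> a b ha hb; rewrite ge_max ha hb.
rewrite /Ux; exact: (@bigmax_ge_seq R _ (index_enum _) (fun j => ell PYgX Cs w alpha x j mu) _ i (mem_index_enum i)).
Qed.

Arguments Ux_eq {d Y R X PYgX n Cs w alpha x mu i}.

Theorem proposition2 (d : measure_display) (Y : measurableType d)
  (R : realType) (X : Type) (PYgX : X -> probability Y R)
  (n : nat) (Cs : 'I_n.+1 -> set Y) (w : 'I_n.+1 -> R) (B alpha : R) :
  0 < alpha < 1 ->
  (forall i, measurable (Cs i)) ->
  injective Cs ->
  (forall i, 0 < w i < B) ->
  forall (x : X) (mu1 mu2 : R) (i1 i2 : 'I_n.+1),
  0 <= mu1 -> mu1 <= mu2 ->
  is_Cmu PYgX Cs w alpha x mu1 i1 ->
  is_Cmu PYgX Cs w alpha x mu2 i2 ->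
  [/\ pC PYgX Cs x i1 <= pC PYgX Cs x i2,
      w i2 * pC PYgX Cs x i2 <= w i1 * pC PYgX Cs x i1,
      Dmu PYgX Cs w alpha x mu2 <= Dmu PYgX Cs w alpha x mu1,
      w i2 * pC PYgX Cs x i2 * Dmu PYgX Cs w alpha x mu2
        <= w i1 * pC PYgX Cs x i1 * Dmu PYgX Cs w alpha x mu1
    & (1 - pC PYgX Cs x i2 - alpha) * Dmu PYgX Cs w alpha x mu2
        <= (1 - pC PYgX Cs x i1 - alpha) * Dmu PYgX Cs w alpha x mu1].
Proof.
move=> /andP[a0 a1] _ _ hw x mu1 mu2 i1 i2 m0 m12 [M1 T1 S1] [M2 T2 S2].
have p0 : forall i, 0 <= pC PYgX Cs x i.
  by move=> i; rewrite /pC fine_ge0 // measure_ge0.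
have U1 := Ux_eq M1; have U2 := Ux_eq M2.
have D1 : (Dmu PYgX Cs w alpha x mu1 = 1 /\ 0 <= ell PYgX Cs w alpha x i1 mu1) \/
          (Dmu PYgX Cs w alpha x mu1 = 0 /\ ell PYgX Cs w alpha x i1 mu1 < 0).
  by rewrite /Dmu U1; case: ifP => h; [left|right; rewrite ltNge h].
have D2 : (Dmu PYgX Cs w alpha x mu2 = 1 /\ 0 <= ell PYgX Cs w alpha x i2 mu2) \/
          (Dmu PYgX Cs w alpha x mu2 = 0 /\ ell PYgX Cs w alpha x i2 mu2 < 0).
  by rewrite /Dmu U2; case: ifP => h; [left|right; rewrite ltNge h].
move: D1 D2; rewrite /ell => D1 D2.
have e1 := M1 i2; have e2 := M2 i1.
have f1 := M1 i1; have f2 := M2 i2.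
move: e1 e2 T1 T2 S1 S2; rewrite /ell => e1 e2 T1 T2 S1 S2.
have w1 := hw i1; have w2 := hw i2.
move: w1 w2 => /andP[w1 _] /andP[w2 _].
have q1 := p0 i1; have q2 := p0 i2.
set P1 := pC PYgX Cs x i1 in e1 e2 T1 S1 q1 D1 D2 *.
set P2 := pC PYgX Cs x i2 in e1 e2 T2 S2 q2 D1 D2 *.
have H1 : P1 <= P2.
  case: (ltrP mu1 mu2) => hm.
    rewrite leNgt; apply/negP => h; nra.
  have hm' : mu1 = mu2 by apply/eqP; rewrite eq_le m12 hm.
  subst mu2.
  have eq12 : w i2 * P2 + mu1 * (P2 - (1 - alpha)) = w i1 * P1 + mu1 * (P1 - (1 - alpha)).
    by apply/eqP; rewrite eq_le e1 e2.
  have ew : w i2 = w i1 by apply/eqP; rewrite eq_le T1 // T2.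
  have l1 := S1 _ eq12 ew.
  have l2 := S2 _ (esym eq12) (esym ew).
  have E : i1 = i2 by apply/val_inj/eqP; rewrite eqn_leq l1 l2.
  by rewrite /P1 /P2 E.
have H2 : w i2 * P2 <= w i1 * P1 by nra.
have H3 : 0 <= w i2 * P2 + mu2 * (P2 - (1 - alpha)) ->
          0 <= w i1 * P1 + mu1 * (P1 - (1 - alpha)).
  move=> h; case: (lerP 0 (P2 - (1 - alpha))) => hs; nra.
case: D2 => [[-> h2]|[-> h2]].
  have h1 := H3 h2.
  case: D1 => [[-> _]|[_ h1']]; last lra.
  split; rewrite ?mulr1 //; lra.
case: D1 => [[-> h1]|[-> h1]]; last first.
  split; rewrite ?mulr0 //; lra.
split; rewrite ?mulr0 ?mulr1 //; try nra.
Qed.
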